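(* Let $L>0$, $U\in\mathbb{R}$, and let $\zeta,f:(-1,\infty)\to\mathbb{R}$ be smooth functions. Let $B$ be a smooth real function on $(\mathbb{R}/L\mathbb{Z})\times I$ ($I$ an open interval) with $1+B_s>0$, satisfying $$\big(B_{ttss}-B_{ssss}+\zeta(B_s)\,B_{ss}+\partial_s f(B_s)\big)(1+B_s)-B_{tt}+\partial_s\frac{(B_t-U)^2}{1+B_s}=0 .$$ Then $$I(t)=\int_0^L\big(B_t+B_{ss}B_{ts}\big)\,\mathrm{d}s$$ is independent of $t\in I$.
   Context: Subscripts denote partial derivatives in $s$ (coordinate along the tube) and $t$ (time). $B$ is the deviation of the back-to-labels map from a uniform flow with velocity $U$, and $a=B_s$ is the relative deviation of the cross-sectional area from equilibrium. The equation is the nondimensionalized equation of motion for a straight expandable tube conveying fluid with constant swirl; $\zeta$ combines wall stiffness and swirl, and $f$ is the derivative of the nonlinear part of the wall elastic energy. Periodic boundary conditions in $s$ are assumed. *)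

(* Defs.v *)
From Stdlib Require Import Reals Lra ClassicalEpsilon.
Open Scope R_scope.

(* Partial derivatives of a two-variable function (s,t) |-> f s t, chosen by
   classical description; meaningful wherever the derivative exists. *)
Definition pds (f : R -> R -> R) : R -> R -> R :=
  fun s t => epsilon (inhabits 0) (fun l => derivable_pt_lim (fun x => f x t) s l).
Definition pdt (f : R -> R -> R) : R -> R -> R :=
  fun s t => epsilon (inhabits 0) (fun l => derivable_pt_lim (fun y => f s y) t l).

Definition d1 (g : R -> R) : R -> R :=
  fun x => epsilon (inhabits 0) (fun l => derivable_pt_lim g x l).

Definition jcont (f : R -> R -> R) (s t : R) : Prop :=
  forall eps, 0 < eps -> exists delta, 0 < delta /\
    forall s' t', Rabs (s' - s) < delta -> Rabs (t' - t) < delta ->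
      Rabs (f s' t' - f s t) < eps.

Fixpoint Ck2 (k : nat) (I : R -> Prop) (f : R -> R -> R) : Prop :=
  match k with
  | O => forall s t, I t -> jcont f s t
  | S k' =>
      (forall s t, I t ->
         (exists l, derivable_pt_lim (fun x => f x t) s l) /\
         (exists l, derivable_pt_lim (fun y => f s y) t l)) /\
      Ck2 k' I (pds f) /\ Ck2 k' I (pdt f)
  end.
Definition smooth2 (I : R -> Prop) (f : R -> R -> R) : Prop := forall k, Ck2 k I f.

Fixpoint Ck1 (k : nat) (D : R -> Prop) (g : R -> R) : Prop :=
  match k with
  | O => forall x, D x -> continuity_pt g x
  | S k' => (forall x, D x -> exists l, derivable_pt_lim g x l) /\ Ck1 k' D (d1 g)
  end.
Definition smooth1 (D : R -> Prop) (g : R -> R) : Prop := forall k, Ck1 k D g.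

Definition open_ivl (I : R -> Prop) : Prop :=
  (exists t, I t) /\
  (forall t, I t -> exists eps, 0 < eps /\ forall u, Rabs (u - t) < eps -> I u) /\
  (forall x y z, I x -> I y -> x <= z <= y -> I z).

(* Main.v *)
Require Import Defs.
From Stdlib Require Import Reals Lra ClassicalEpsilon FunctionalExtensionality.
From Coquelicot Require Import Coquelicot.
Open Scope R_scope.

Lemma pds_spec g s t : (exists l, derivable_pt_lim (fun x => g x t) s l) ->
  derivable_pt_lim (fun x => g x t) s (pds g s t).
Proof. intro H; unfold pds; apply epsilon_spec; exact H. Qed.
Lemma pdt_spec g s t : (exists l, derivable_pt_lim (fun y => g s y) t l) ->
  derivable_pt_lim (fun y => g s y) t (pdt g s t).
Proof. intro H; unfold pdt; apply epsilon_spec; exact H. Qed.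

Section S.
Variable J : R -> Prop.
Hypothesis hJ : open_ivl J.

Lemma sm_ds g : smooth2 J g -> smooth2 J (pds g).
Proof. intros H k; exact (proj1 (proj2 (H (S k)))). Qed.
Lemma sm_dt g : smooth2 J g -> smooth2 J (pdt g).
Proof. intros H k; exact (proj2 (proj2 (H (S k)))). Qed.
Lemma DS g s t : smooth2 J g -> J t -> derivable_pt_lim (fun x => g x t) s (pds g s t).
Proof. intros H Ht; apply pds_spec; exact (proj1 (proj1 (H 1%nat) s t Ht)). Qed.
Lemma DT g s t : smooth2 J g -> J t -> derivable_pt_lim (fun y => g s y) t (pdt g s t).
Proof. intros H Ht; apply pdt_spec; exact (proj2 (proj1 (H 1%nat) s t Ht)). Qed.
Lemma JC g s t : smooth2 J g -> J t -> continuity_2d_pt g s t.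
Proof. intros H Ht eps. destruct (H O s t Ht eps (cond_pos eps)) as [d [Hd H']].
  exists (mkposreal d Hd); simpl; exact H'. Qed.
Lemma locJ t : J t -> locally t J.
Proof. intro Ht. destruct hJ as [_ [Ho _]]. destruct (Ho t Ht) as [e [He H]].
  exists (mkposreal e He). intros y Hy. apply H. exact Hy. Qed.
Lemma DSd g s t : smooth2 J g -> J t -> Derive (fun x => g x t) s = pds g s t.
Proof. intros H Ht; apply is_derive_unique, is_derive_Reals, DS; auto. Qed.
Lemma DTd g s t : smooth2 J g -> J t -> Derive (fun y => g s y) t = pdt g s t.
Proof. intros H Ht; apply is_derive_unique, is_derive_Reals, DT; auto. Qed.
Lemma loc2 (P : R -> R -> Prop) s t : J t -> (forall u v, J v -> P u v) -> locally_2d P s t.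
Proof. intros Ht HP. destruct hJ as [_ [Ho _]]. destruct (Ho t Ht) as [e [He HJe]].
  exists (mkposreal e He); simpl; intros u v _ Hv; apply HP, HJe, Hv. Qed.

Lemma DS_in g u v : smooth2 J g -> J v ->
  Derive (fun z => Derive (fun t' => g t' z) u) v = pdt (pds g) u v.
Proof. intros H Hv.
  rewrite (Derive_ext_loc _ (fun z => pds g u z)).
  - apply DTd; auto; apply sm_ds; auto.
  - apply (filter_imp J); [intros z Hz; apply DSd; auto | apply locJ; auto]. Qed.
Lemma DT_in g u v : smooth2 J g -> J v ->
  Derive (fun z => Derive (fun t' => g z t') v) u = pds (pdt g) u v.
Proof. intros H Hv.
  rewrite (Derive_ext _ (fun z => pdt g z v)).
  - apply DSd; auto; apply sm_dt; auto.
  - intro z; apply DTd; auto. Qed.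

Lemma schw g s t : smooth2 J g -> J t -> pdt (pds g) s t = pds (pdt g) s t.
Proof. intros H Ht.
  assert (Hs := Schwarz g s t).
  rewrite (DT_in g s t H Ht), (DS_in g s t H Ht) in Hs. symmetry; apply Hs.
  - apply loc2; auto. intros u v Hv. repeat split.
    + exists (pds g u v); apply is_derive_Reals, DS; auto.
    + exists (pdt g u v); apply is_derive_Reals, DT; auto.
    + apply (ex_derive_ext (fun z => pdt g z v)). intro; symmetry; apply DTd; auto.
      exists (pds (pdt g) u v); apply is_derive_Reals, DS; auto; apply sm_dt; auto.
    + apply (ex_derive_ext_loc (fun z => pds g u z)).
      apply (filter_imp J); [intros z Hz; symmetry; apply DSd; auto | apply locJ; auto].
      exists (pdt (pds g) u v); apply is_derive_Reals, DT; auto; apply sm_ds; auto.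
  - apply (continuity_2d_pt_ext_loc (pds (pdt g))).
    apply loc2; auto. intros u v Hv; symmetry; apply DT_in; auto.
    apply JC; auto; apply sm_ds, sm_dt, H.
  - apply (continuity_2d_pt_ext_loc (pdt (pds g))).
    apply loc2; auto. intros u v Hv; symmetry; apply DS_in; auto.
    apply JC; auto; apply sm_dt, sm_ds, H.
Qed.
Lemma loc2' (P : R -> R -> Prop) s t : J s -> (forall u v, J u -> P u v) -> locally_2d P s t.
Proof. intros Ht HP. destruct hJ as [_ [Ho _]]. destruct (Ho s Ht) as [e [He HJe]].
  exists (mkposreal e He); simpl; intros u v Hu _; apply HP, HJe, Hu. Qed.

Variable L : R.
Definition Per (g : R -> R -> R) := forall s t, J t -> g (s + L) t = g s t.

Lemma shiftD h s l : derivable_pt_lim h (s + L) l -> derivable_pt_lim (fun x => h (x + L)) s l.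
Proof. intro H.
  assert (H1: derivable_pt_lim (fun x => x + L) s 1).
  { replace 1 with (1+0) by ring. apply (derivable_pt_lim_plus id (fct_cte L));
    [apply derivable_pt_lim_id|apply derivable_pt_lim_const]. }
  pose proof (derivable_pt_lim_comp _ h s 1 l H1 H) as H2. rewrite Rmult_1_r in H2. exact H2. Qed.

Lemma per_ds g : smooth2 J g -> Per g -> Per (pds g).
Proof. intros H P s t Ht.
  pose proof (shiftD _ _ _ (DS g (s+L) t H Ht)) as H1. cbv beta in H1.
  replace (fun x => g (x + L) t) with (fun x => g x t) in H1
    by (apply functional_extensionality; intro x; symmetry; apply P; auto).
  eapply uniqueness_limite; [exact H1| apply DS; auto]. Qed.

Lemma per_dt g : smooth2 J g -> Per g -> Per (pdt g).
Proof. intros H P s t Ht.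
  pose proof (DT g (s+L) t H Ht) as H1. apply is_derive_Reals in H1.
  apply (is_derive_ext_loc _ (fun y => g s y)) in H1.
  apply is_derive_Reals in H1.
  eapply uniqueness_limite; [exact H1| apply DT; auto].
  apply (filter_imp J); [intros y Hy; apply P; auto| apply locJ; auto]. Qed.
End S.

Lemma pds_ext g h s t : (forall x, g x t = h x t) -> pds g s t = pds h s t.
Proof. intro H; unfold pds.
  replace (fun x => g x t) with (fun x => h x t) by (apply functional_extensionality; intro; auto).
  reflexivity. Qed.

Lemma c2d_cont1 g s t : continuity_2d_pt g s t -> continuous (fun x => g x t) s.
Proof. intros H. apply (proj2 (filterlim_locally _ _)). intro eps.
  destruct (H eps) as [d Hd]. exists d. intros y Hy. apply Hd. exact Hy.
  rewrite Rminus_eq_0, Rabs_R0; apply cond_pos. Qed.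

Lemma c2d_swap g x y : continuity_2d_pt g x y -> continuity_2d_pt (fun u v => g v u) y x.
Proof. intros H eps; destruct (H eps) as [d Hd]; exists d; intros u v Hu Hv; apply Hd; auto. Qed.

Lemma antider g : (forall x, -1 < x -> continuity_pt g x) ->
  forall x, -1 < x -> derivable_pt_lim (fun b => RInt g 0 b) x (g x).
Proof. intros Hg x Hx. apply is_derive_Reals.
  assert (Hl : locally x (fun b => -1 < b)).
  { assert (He : 0 < x + 1) by lra. exists (mkposreal _ He). intros y Hy.
    change (Rabs (y - x) < x + 1) in Hy. apply Rabs_def2 in Hy. lra. }
  apply (is_derive_RInt g (fun b => RInt g 0 b) 0 x).
  - apply (filter_imp (fun b => -1 < b)); [|exact Hl].
    intros b Hb. apply (RInt_correct g 0 b). apply (ex_RInt_continuous g 0 b). intros z Hz.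
    apply continuity_pt_filterlim, Hg.
    assert (-1 < Rmin 0 b) by (unfold Rmin; destruct Rle_dec; lra). lra.
  - apply continuity_pt_filterlim, Hg, Hx. Qed.

Lemma Dp f g x a b : derivable_pt_lim f x a -> derivable_pt_lim g x b ->
  derivable_pt_lim (fun y => f y + g y) x (a + b).
Proof. intros; exact (derivable_pt_lim_plus f g x a b H H0). Qed.
Lemma Dm f g x a b : derivable_pt_lim f x a -> derivable_pt_lim g x b ->
  derivable_pt_lim (fun y => f y - g y) x (a - b).
Proof. intros; exact (derivable_pt_lim_minus f g x a b H H0). Qed.
Lemma Dx f g x a b : derivable_pt_lim f x a -> derivable_pt_lim g x b ->
  derivable_pt_lim (fun y => f y * g y) x (a * g x + f x * b).
Proof. intros; exact (derivable_pt_lim_mult f g x a b H H0). Qed.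
Lemma Dc k x : derivable_pt_lim (fun _ => k) x 0.
Proof. exact (derivable_pt_lim_const k x). Qed.
Lemma Dcomp f g x a b : derivable_pt_lim f x a -> derivable_pt_lim g (f x) b ->
  derivable_pt_lim (fun y => g (f y)) x (b * a).
Proof. intros; exact (derivable_pt_lim_comp f g x a b H H0). Qed.
Lemma Dd f g x a b : derivable_pt_lim f x a -> derivable_pt_lim g x b -> g x <> 0 ->
  derivable_pt_lim (fun y => f y / g y) x ((a * g x - b * f x) / (g x)²).
Proof. intros; exact (derivable_pt_lim_div f g x a b H H0 H1). Qed.
Lemma Dsq x : derivable_pt_lim (fun y => y ^ 2) x (2 * x).
Proof. pose proof (derivable_pt_lim_pow x 2). simpl in H. replace (2 * x) with ((1+1) * (x * 1)) by ring. exact H. Qed.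
Lemma Dval f x l l' : derivable_pt_lim f x l -> l = l' -> derivable_pt_lim f x l'.
Proof. intros H ->; exact H. Qed.

Theorem mainTheorem4
  (L U : R) (zeta f : R -> R) (J : R -> Prop) (B : R -> R -> R)
  (hL : 0 < L)
  (hzeta : smooth1 (fun x => -1 < x) zeta)
  (hf : smooth1 (fun x => -1 < x) f)
  (hI : open_ivl J)
  (hB : smooth2 J B)
  (hper : forall s t, J t -> B (s + L) t = B s t)
  (hpos : forall s t, J t -> 0 < 1 + pds B s t)
  (heq : forall s t, J t ->
     (pds (pds (pdt (pdt B))) s t - pds (pds (pds (pds B))) s t
        + zeta (pds B s t) * pds (pds B) s t
        + pds (fun s' t' => f (pds B s' t')) s t) * (1 + pds B s t)
     - pdt (pdt B) s t
     + pds (fun s' t' => (pdt B s' t' - U) ^ 2 / (1 + pds B s' t')) s t = 0) :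
  forall t1 t2 (ht1 : J t1) (ht2 : J t2)
    (pr1 : Riemann_integrable
             (fun s => pdt B s t1 + pds (pds B) s t1 * pds (pdt B) s t1) 0 L)
    (pr2 : Riemann_integrable
             (fun s => pdt B s t2 + pds (pds B) s t2 * pds (pdt B) s t2) 0 L),
    RiemannInt pr1 = RiemannInt pr2.
Proof.
  intros t1 t2 ht1 ht2 pr1 pr2.
  assert (Hconv : forall z, Rmin t1 t2 <= z <= Rmax t1 t2 -> J z).
  { intros z Hz. destruct hI as [_ [_ Hc]]. unfold Rmin, Rmax in Hz; destruct Rle_dec;
    [apply (Hc t1 t2)|apply (Hc t2 t1)]; auto; lra. }
  set (b1 := pds B) in *. set (b2 := pds b1) in *. set (b3 := pds b2) in *. set (b4 := pds b3) in *.
  set (bt := pdt B) in *. set (c := pds bt) in *. set (c2 := pds c) in *. set (btt := pdt bt) in *.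
  set (d := pds btt) in *. set (d2 := pds d) in *.
  assert (sb1 : smooth2 J b1) by (apply sm_ds; exact hB).
  assert (sb2 : smooth2 J b2) by (apply sm_ds; exact sb1).
  assert (sb3 : smooth2 J b3) by (apply sm_ds; exact sb2).
  assert (sbt : smooth2 J bt) by (apply sm_dt; exact hB).
  assert (sc : smooth2 J c) by (apply sm_ds; exact sbt).
  assert (sc2 : smooth2 J c2) by (apply sm_ds; exact sc).
  assert (sbtt : smooth2 J btt) by (apply sm_dt; exact sbt).
  assert (sd : smooth2 J d) by (apply sm_ds; exact sbtt).
  assert (S1 : forall s t, J t -> pdt b2 s t = c2 s t).
  { intros s t Ht. etransitivity; [exact (schw J hI b1 s t sb1 Ht)|].
    apply pds_ext. intro x. exact (schw J hI B x t hB Ht). }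
  assert (S2 : forall s t, J t -> pdt c s t = d s t).
  { intros s t Ht. exact (schw J hI bt s t sbt Ht). }
  pose (G := fun s t => bt s t + b2 s t * c s t).
  pose (E := fun s t => btt s t + c2 s t * c s t + b2 s t * d s t).
  assert (DG : forall s t, J t -> derivable_pt_lim (fun y => G s y) t (E s t)).
  { intros s t Ht. unfold G.
    apply (Dval _ _ (btt s t + (pdt b2 s t * c s t + b2 s t * pdt c s t))).
    - apply Dp; [exact (DT J bt s t sbt Ht)|]. apply Dx.
      + exact (DT J b2 s t sb2 Ht).
      + exact (DT J c s t sc Ht).
    - rewrite S1, S2 by exact Ht. unfold E. ring. }
  assert (EC : forall s t, J t -> continuity_2d_pt E s t).
  { intros s t Ht. unfold E.
    repeat apply continuity_2d_pt_plus; try apply continuity_2d_pt_mult; apply (JC J); assumption. }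
  assert (GC : forall s t, J t -> continuity_2d_pt G s t).
  { intros s t Ht. unfold G.
    repeat apply continuity_2d_pt_plus; try apply continuity_2d_pt_mult; apply (JC J); assumption. }
  set (Q := fun s' t' => (bt s' t' - U) ^ 2 / (1 + b1 s' t')) in heq.
  set (pf := pds (fun s' t' => f (b1 s' t'))) in heq.
  pose (Z := fun x => RInt (fun y => zeta y * (1 + y)) 0 x).
  pose (F := fun x => RInt f 0 x).
  pose (H := fun s t => d s t * (1 + b1 s t) + c s t * c s t * / 2 - b3 s t * (1 + b1 s t)
     + b2 s t * b2 s t * / 2 + Z (b1 s t) + f (b1 s t) * (1 + b1 s t) - F (b1 s t) + Q s t).
  assert (DH : forall s t, J t -> derivable_pt_lim (fun x => H x t) s (E s t)).
  { intros s t Ht.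
    assert (Hp : -1 < b1 s t) by (generalize (hpos s t Ht); fold b1; lra).
    assert (Hb1 : derivable_pt_lim (fun x => b1 x t) s (b2 s t)) by exact (DS J b1 s t sb1 Ht).
    assert (Hb2 : derivable_pt_lim (fun x => b2 x t) s (b3 s t)) by exact (DS J b2 s t sb2 Ht).
    assert (Hb3 : derivable_pt_lim (fun x => b3 x t) s (b4 s t)) by exact (DS J b3 s t sb3 Ht).
    assert (Hbt : derivable_pt_lim (fun x => bt x t) s (c s t)) by exact (DS J bt s t sbt Ht).
    assert (Hc : derivable_pt_lim (fun x => c x t) s (c2 s t)) by exact (DS J c s t sc Ht).
    assert (Hd : derivable_pt_lim (fun x => d x t) s (d2 s t)) by exact (DS J d s t sd Ht).
    assert (Hf1 : derivable_pt_lim (fun x => f (b1 x t)) s (pf s t)).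
    { apply (pds_spec (fun s' t' => f (b1 s' t'))).
      destruct (proj1 (hf 1%nat) (b1 s t) Hp) as [l Hl].
      exists (l * b2 s t). apply (Dcomp (fun x => b1 x t) f); assumption. }
    assert (HQ : derivable_pt_lim (fun x => Q x t) s (pds Q s t)).
    { apply (pds_spec Q). eexists. unfold Q. apply Dd.
      - apply (Dcomp (fun x => bt x t - U) (fun y => y ^ 2)).
        + apply Dm; [exact Hbt| apply Dc].
        + apply Dsq.
      - apply Dp; [apply Dc| exact Hb1].
      - lra. }
    assert (Hzc : forall x, -1 < x -> continuity_pt (fun y => zeta y * (1 + y)) x).
    { intros x Hx. apply (continuity_pt_mult zeta (fun y => 1 + y)).
      exact (hzeta O x Hx). apply (continuity_pt_plus (fct_cte 1) id).
      apply continuity_pt_const; intros u v; reflexivity. apply derivable_continuous_pt, derivable_pt_id. }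
    assert (HZ : derivable_pt_lim (fun x => Z (b1 x t)) s (zeta (b1 s t) * (1 + b1 s t) * b2 s t)).
    { apply (Dcomp (fun x => b1 x t) Z); [exact Hb1|].
      exact (antider _ Hzc (b1 s t) Hp). }
    assert (HF : derivable_pt_lim (fun x => F (b1 x t)) s (f (b1 s t) * b2 s t)).
    { apply (Dcomp (fun x => b1 x t) F); [exact Hb1|].
      exact (antider _ (hf O) (b1 s t) Hp). }
    unfold H. eapply Dval.
    - repeat (first [exact Hb1 | exact Hb2 | exact Hb3 | exact Hbt | exact Hc | exact Hd
            | exact Hf1 | exact HQ | exact HZ | exact HF
            | apply Dc | apply Dm | apply Dp | apply Dx]).
    - generalize (heq s t Ht). unfold E. cbv beta. intro HH. lra. }
  assert (Pb1 : Per J L b1) by (apply per_ds; auto).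
  assert (Pb2 : Per J L b2) by (apply per_ds; auto).
  assert (Pb3 : Per J L b3) by (apply per_ds; auto).
  assert (Pbt : Per J L bt) by (apply per_dt; auto).
  assert (Pc : Per J L c) by (apply per_ds; auto).
  assert (Pbtt : Per J L btt) by (apply per_dt; auto).
  assert (Pd : Per J L d) by (apply per_ds; auto).
  assert (HP : forall t, J t -> H L t = H 0 t).
  { intros t Ht. replace L with (0 + L) at 1 by ring. unfold H, Q. cbv beta.
    rewrite (Pd 0 t Ht), (Pb1 0 t Ht), (Pc 0 t Ht), (Pb3 0 t Ht), (Pb2 0 t Ht), (Pbt 0 t Ht).
    reflexivity. }
  assert (HI0 : forall t, J t -> RInt (fun s => E s t) 0 L = 0).
  { intros t Ht.
    rewrite (is_RInt_unique (fun s => E s t) 0 L (minus (H L t) (H 0 t))).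
    - rewrite HP by exact Ht. unfold minus, plus, opp; simpl. ring.
    - apply (is_RInt_derive (fun x => H x t) (fun x => E x t)).
      + intros x _. apply is_derive_Reals, DH; exact Ht.
      + intros x _. apply c2d_cont1, EC; exact Ht. }
  pose (Ifun := fun y => RInt (fun s => G s y) 0 L).
  assert (DI : forall y, J y -> is_derive Ifun y 0).
  { intros y Hy.
    assert (HD := is_derive_RInt_param (fun y s => G s y) 0 L y).
    rewrite (RInt_ext _ (fun s => E s y)) in HD.
    - rewrite HI0 in HD by exact Hy. apply HD.
      + apply (filter_imp J); [|apply (locJ J hI); exact Hy].
        intros z Hz s _. exists (E s z). apply is_derive_Reals, DG; exact Hz.
      + intros s _. apply (continuity_2d_pt_ext_loc (fun u v => E v u)).
        * apply (loc2' J hI); [exact Hy|]. intros u v Hu.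
          symmetry; apply is_derive_unique, is_derive_Reals, DG; exact Hu.
        * apply c2d_swap, EC; exact Hy.
      + apply (filter_imp J); [|apply (locJ J hI); exact Hy].
        intros z Hz. apply (ex_RInt_continuous (fun s => G s z)).
        intros x _. apply c2d_cont1, GC; exact Hz.
    - intros x _. apply is_derive_unique, is_derive_Reals, DG; exact Hy. }
  destruct (MVT_gen Ifun t1 t2 (fun _ => 0)) as [cc [_ Hc]].
  - intros x Hx. apply DI, Hconv; lra.
  - intros x Hx. apply continuity_pt_filterlim. apply (ex_derive_continuous Ifun).
    exists 0; apply DI, Hconv; exact Hx.
  - rewrite <- (RInt_Reals _ _ _ pr1), <- (RInt_Reals _ _ _ pr2).
    change (Ifun t1 = Ifun t2). lra.
Qed.
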